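(* For every $n\ge1$, almost surely, $\mathbf W^{2n,\uparrow}$ and $\mathbf W^{2n,\downarrow}$ each contain a unique bi-infinite path.
   Context: For $n\ge1$, $\mathsf{Cyl}^\uparrow_{2n}=\{(x,t):x\in\mathbb Z/2n\mathbb Z,t\in\mathbb Z,x-t\equiv0\ (\mathrm{mod}\ 2)\}$, $\mathsf{Cyl}^\downarrow_{2n}=\{(x,t):x-t\equiv1\ (\mathrm{mod}\ 2)\}$. Let $(\xi(w))_{w\in\mathsf{Cyl}^\uparrow_{2n}}$ be i.i.d. with $\mathbb P(\xi=1)=\mathbb P(\xi=-1)=1/2$. The cylindric lattice web $\mathbf W^{2n,\uparrow}$ consists of the walks $\mathbf W^{2n,\uparrow}_{(x,t)}(t)=x$, $\mathbf W^{2n,\uparrow}_{(x,t)}(s)=\mathbf W^{2n,\uparrow}_{(x,t)}(s-1)+\xi(\mathbf W^{2n,\uparrow}_{(x,t)}(s-1),s-1)\bmod 2n$ for integers $s>t$, $(x,t)\in\mathsf{Cyl}^\uparrow_{2n}$; equivalently its edge set is $\{(w,w+(\xi(w),1)):w\in\mathsf{Cyl}^\uparrow_{2n}\}$. Its dual $\mathbf W^{2n,\downarrow}$ consists of the walks $\mathbf W^{2n,\downarrow}_{(x,t)}(t)=x$, $\mathbf W^{2n,\downarrow}_{(x,t)}(s)=\mathbf W^{2n,\downarrow}_{(x,t)}(s+1)-\xi(\mathbf W^{2n,\downarrow}_{(x,t)}(s+1),s)\bmod 2n$ for integers $s<t$, $(x,t)\in\mathsf{Cyl}^\downarrow_{2n}$.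 For $D\in\{\uparrow,\downarrow\}$, a bi-infinite path of $\mathsf{Cyl}^D_{2n}$ is a sequence $(x_i,i)_{i\in\mathbb Z}\subset\mathsf{Cyl}^D_{2n}$ with $x_i-x_{i-1}\bmod 2n\in\{1,2n-1\}$ for all $i$; $\mathbf W^{2n,D}$ contains it if all its edges are edges of $\mathbf W^{2n,D}$. *)

(* Defs.v *)
From Stdlib Require Import ZArith Reals List.
Open Scope R_scope.

(* A sample is a coin value for every site;
   the measure is the uniform (fair-coin) product measure.  Only the
   sites (x,t) with 0 <= x < 2n and x - t even (i.e. Cyl^up_{2n}, with
   x its representative in {0,..,2n-1}) are used; the remaining coins are
   dummy independent coordinates, which does not affect the law of xi. *)
Definition site := (Z * Z)%type.
Definition Omega := site -> bool.

Definition cyl (L : list site) (v : site -> bool) (w : Omega) : Prop :=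
  forall s, In s L -> w s = v s.

(* N is a null set for the fair-coin product measure: for every eps > 0 it
   is covered by countably many cylinder sets of total measure <= eps
   (a cylinder fixing k distinct coordinates has probability 2^{-k}). *)
Definition null (N : Omega -> Prop) : Prop :=
  forall eps : R, 0 < eps ->
    exists (L : nat -> list site) (v : nat -> site -> bool),
      (forall k, NoDup (L k)) /\
      (forall w, N w -> exists k, cyl (L k) (v k) w) /\
      (forall K, sum_f_R0 (fun k => (/ 2) ^ length (L k)) K <= eps).

Definition almost_surely (E : Omega -> Prop) : Prop :=
  null (fun w => ~ E w).

Open Scope Z_scope.

Definition xi (n : Z) (w : Omega) (x t : Z) : Z :=
  if w (x mod (2 * n), t) then 1 else -1.

(* Bi-infinite path of Cyl^D_{2n}: positions in {0,..,2n-1} (representatives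
   of Z/2nZ), parity d (0 for up, 1 for down) for x_i - i, and
   x_i - x_{i-1} mod 2n in {1, 2n-1}. *)
Definition biinf_path (n : Z) (d : Z) (p : Z -> Z) : Prop :=
  forall i : Z,
    0 <= p i < 2 * n /\
    (p i - i) mod 2 = d /\
    ((p i - p (i - 1)) mod (2 * n) = 1 \/
     (p i - p (i - 1)) mod (2 * n) = 2 * n - 1).

Definition path_up (n : Z) (p : Z -> Z) : Prop := biinf_path n 0 p.
Definition path_down (n : Z) (p : Z -> Z) : Prop := biinf_path n 1 p.

(* Edges of W^{2n,up}: (w, w + (xi(w),1)) for w in Cyl^up.
   The path edge between (p(i-1),i-1) and (p i,i) is such an edge. *)
Definition in_web_up (n : Z) (w : Omega) (p : Z -> Z) : Prop :=
  forall i : Z, p i = (p (i - 1) + xi n w (p (i - 1)) (i - 1)) mod (2 * n).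

(* Edges of the dual W^{2n,down}: ((y,s+1),(y - xi(y,s), s)) for
   (y,s+1) in Cyl^down.  The path edge between (p i,i) and (p(i-1),i-1)
   is such an edge. *)
Definition in_web_down (n : Z) (w : Omega) (p : Z -> Z) : Prop :=
  forall i : Z, p (i - 1) = (p i - xi n w (p i) (i - 1)) mod (2 * n).

Definition unique_path_up (n : Z) (w : Omega) : Prop :=
  (exists p, path_up n p /\ in_web_up n w p) /\
  (forall p q, path_up n p -> in_web_up n w p ->
               path_up n q -> in_web_up n w q -> forall i, p i = q i).

Definition unique_path_down (n : Z) (w : Omega) : Prop :=
  (exists p, path_down n p /\ in_web_down n w p) /\
  (forall p q, path_down n p -> in_web_down n w p ->
               path_down n q -> in_web_down n w q -> forall i, p i = q i).

(* Main.v *)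
Require Import Defs.
From Stdlib Require Import ZArith Reals List Lia Lra Psatz Classical IndefiniteDescription.
Import ListNotations.
Open Scope R_scope.

Definition cylT := (list site * (site -> bool))%type.
Definition m1 (c : cylT) : R := (/2) ^ length (fst c).
Fixpoint mass (cs : list cylT) : R :=
  match cs with [] => 0 | c :: cs' => m1 c + mass cs' end.

Lemma m1_pos c : 0 < m1 c.
Proof. unfold m1. apply pow_lt. lra. Qed.

Lemma mass_nonneg cs : 0 <= mass cs.
Proof. induction cs; simpl; [lra|]. pose proof (m1_pos a). lra. Qed.

Lemma mass_app a b : mass (a ++ b) = mass a + mass b.
Proof. induction a; simpl; lra. Qed.

Lemma sum_nth_le : forall l K d, (K < length l)%nat ->
  sum_f_R0 (fun k => m1 (nth k l d)) K <= mass l.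
Proof.
  induction l as [|c l IH]; intros K d HK; simpl in HK; [lia|].
  destruct K as [|K].
  - simpl. pose proof (mass_nonneg l). lra.
  - rewrite decomp_sum by lia. simpl pred. simpl.
    specialize (IH K d ltac:(lia)). lra.
Qed.

Definition Pre (C : nat -> list cylT) K := flat_map C (seq 0 (S K)).

Lemma Pre_S C K : Pre C (S K) = Pre C K ++ C (S K).
Proof. unfold Pre. rewrite seq_S, flat_map_app. simpl. rewrite app_nil_r. reflexivity. Qed.

Lemma Pre_len C K : (forall J, C J <> []) -> (S K <= length (Pre C K))%nat.
Proof.
  intros H. induction K.
  - unfold Pre. simpl. rewrite app_nil_r. destruct (C 0%nat) eqn:E; [now destruct (H 0%nat)|]. simpl; lia.
  - rewrite Pre_S, length_app. destruct (C (S K)) eqn:E; [now destruct (H (S K))|]. simpl; lia.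
Qed.

Lemma Pre_prefix C K K' : (K <= K')%nat -> exists r, Pre C K' = Pre C K ++ r.
Proof.
  induction 1.
  - exists []. now rewrite app_nil_r.
  - destruct IHle as [r Hr]. exists (r ++ C (S m)). rewrite Pre_S, Hr, app_assoc. reflexivity.
Qed.

Lemma Pre_mass C K : mass (Pre C K) = sum_f_R0 (fun J => mass (C J)) K.
Proof.
  induction K.
  - unfold Pre. simpl. rewrite app_nil_r. reflexivity.
  - rewrite Pre_S, mass_app, IHK. simpl. reflexivity.
Qed.

Lemma In_Pre C J c : In c (C J) -> In c (Pre C J).
Proof. intros H. unfold Pre. apply in_flat_map. exists J. split; auto. apply in_seq. lia. Qed.

Lemma union_null (E : Omega -> Prop) (C : nat -> list cylT) (eps : R) :
  (forall J, C J <> []) ->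
  (forall J c, In c (C J) -> NoDup (fst c)) ->
  (forall w, E w -> exists J c, In c (C J) /\ cyl (fst c) (snd c) w) ->
  (forall K, sum_f_R0 (fun J => mass (C J)) K <= eps) ->
  exists (L : nat -> list site) (v : nat -> site -> bool),
      (forall k, NoDup (L k)) /\
      (forall w, E w -> exists k, cyl (L k) (v k) w) /\
      (forall K, sum_f_R0 (fun k => (/ 2) ^ length (L k)) K <= eps).
Proof.
  intros Hne Hnd Hcov Hsum.
  set (d0 := (@nil site, fun _ : site => true) : cylT).
  set (Lk := fun k => nth k (Pre C k) d0).
  assert (Lk_eq : forall k K, (k <= K)%nat -> Lk k = nth k (Pre C K) d0).
  { intros k K Hk. unfold Lk. destruct (Pre_prefix C k K Hk) as [r Hr]. rewrite Hr.
    rewrite app_nth1; auto. pose proof (Pre_len C k Hne). lia. }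
  exists (fun k => fst (Lk k)), (fun k => snd (Lk k)). split; [|split].
  - intros k. assert (Hin : In (Lk k) (Pre C k)).
    { unfold Lk. apply nth_In. pose proof (Pre_len C k Hne). lia. }
    unfold Pre in Hin. apply in_flat_map in Hin. destruct Hin as [J [_ HJ]]. eapply Hnd; eauto.
  - intros w Hw. destruct (Hcov w Hw) as [J [c [Hc Hcy]]].
    apply In_Pre in Hc. destruct (In_nth _ _ d0 Hc) as [k0 [Hk0 Hnth]].
    exists k0. rewrite (Lk_eq k0 (Nat.max J k0)) by lia.
    destruct (Pre_prefix C J (Nat.max J k0)) as [r Hr]; [lia|]. rewrite Hr, app_nth1 by auto.
    rewrite Hnth. exact Hcy.
  - intros K. rewrite (sum_eq _ (fun k => m1 (nth k (Pre C K) d0))).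
    + eapply Rle_trans. apply sum_nth_le. pose proof (Pre_len C K Hne). lia.
      rewrite Pre_mass. apply Hsum.
    + intros i Hi. unfold m1. rewrite <- Lk_eq by lia. reflexivity.
Qed.
Open Scope R_scope.

Definition beta (st : site) : bool := negb (Z.eqb (fst st) 0).
Definition site_eq_dec : forall a b : site, {a = b} + {a <> b}.
Proof. decide equality; apply Z.eq_dec. Defined.

Fixpoint mism (l : list site) : list cylT :=
  match l with
  | [] => []
  | s :: l' => ([s], fun _ => negb (beta s)) ::
      map (fun c => (s :: fst c, fun x => if site_eq_dec x s then beta s else snd c x)) (mism l')
  end.

Lemma mass_map_cons s g cs :
  mass (map (fun c => (s :: fst c, g c)) cs) = /2 * mass cs.
Proof. induction cs; simpl; [lra|]. rewrite IHcs. unfold m1. simpl. lra. Qed.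

Lemma mism_mass l : mass (mism l) = 1 - (/2) ^ length l.
Proof.
  induction l; simpl; [lra|]. rewrite mass_map_cons, IHl. unfold m1. simpl. lra.
Qed.

Lemma mism_len l : length (mism l) = length l.
Proof. induction l; simpl; auto. rewrite length_map. f_equal. exact IHl. Qed.

Lemma mism_good l : NoDup l -> forall c, In c (mism l) -> NoDup (fst c) /\ incl (fst c) l.
Proof.
  induction l as [|s l IH]; simpl; intros Hnd c Hc; [contradiction|].
  inversion Hnd; subst.
  destruct Hc as [<-|Hc].
  - simpl. split. constructor; [intros []|constructor]. intros x [<-|[]]; left; auto.
  - apply in_map_iff in Hc. destruct Hc as [c' [<- Hc']]. destruct (IH H2 c' Hc') as [A B].
    simpl. split. constructor; [intros Hin; exact (H1 (B _ Hin))|exact A].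
    intros x [<-|Hx]; [left; auto | right; auto].
Qed.

Lemma mism_cover l w : (exists s, In s l /\ w s <> beta s) ->
  exists c, In c (mism l) /\ cyl (fst c) (snd c) w.
Proof.
  induction l as [|s l IH]; intros [s0 [Hin Hne]]; simpl in Hin; [contradiction|].
  destruct (Bool.bool_dec (w s) (beta s)) as [Heq|Hneq].
  - destruct Hin as [<-|Hin]; [contradiction|].
    destruct IH as [c [Hc Hcy]]. exists s0; auto.
    exists (s :: fst c, fun x => if site_eq_dec x s then beta s else snd c x).
    split. simpl; right. apply in_map_iff. exists c; auto.
    intros x Hx. simpl. destruct (site_eq_dec x s) as [->|Hxs]; auto.
    destruct Hx as [->|Hx]; [congruence|]. apply Hcy; auto.
  - exists ([s], fun _ => negb (beta s)). split. simpl; auto.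
    intros x [Hx|[]]. subst x. simpl. destruct (w s), (beta s); simpl in *; congruence.
Qed.

Definition merge (c1 c2 : cylT) : cylT :=
  (fst c1 ++ fst c2, fun x => if in_dec site_eq_dec x (fst c1) then snd c1 x else snd c2 x).
Definition prod (C1 C2 : list cylT) := flat_map (fun c1 => map (merge c1) C2) C1.

Lemma mass_map_merge c C2 : mass (map (merge c) C2) = m1 c * mass C2.
Proof.
  induction C2; simpl; [lra|]. rewrite IHC2. unfold m1, merge. simpl.
  rewrite length_app, pow_add. lra.
Qed.

Lemma mass_prod C1 C2 : mass (prod C1 C2) = mass C1 * mass C2.
Proof.
  induction C1; simpl; [lra|]. unfold prod in *. simpl. rewrite mass_app, mass_map_merge, IHC1. lra.
Qed.

Lemma prod_ne C1 C2 : C1 <> [] -> C2 <> [] -> prod C1 C2 <> [].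
Proof. destruct C1, C2; simpl; congruence. Qed.

Lemma prod_in c C1 C2 : In c (prod C1 C2) -> exists c1 c2, In c1 C1 /\ In c2 C2 /\ c = merge c1 c2.
Proof.
  unfold prod. intros H. apply in_flat_map in H. destruct H as [c1 [H1 H]].
  apply in_map_iff in H. destruct H as [c2 [<- H2]]. exists c1, c2; auto.
Qed.

Lemma merge_cyl c1 c2 w : cyl (fst c1) (snd c1) w -> cyl (fst c2) (snd c2) w ->
  cyl (fst (merge c1 c2)) (snd (merge c1 c2)) w.
Proof.
  intros H1 H2 x Hx. simpl. destruct (in_dec site_eq_dec x (fst c1)); auto.
  apply in_app_or in Hx. destruct Hx; [contradiction|]. auto.
Qed.

Lemma prod_cover C1 C2 w : (exists c, In c C1 /\ cyl (fst c) (snd c) w) ->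
  (exists c, In c C2 /\ cyl (fst c) (snd c) w) ->
  exists c, In c (prod C1 C2) /\ cyl (fst c) (snd c) w.
Proof.
  intros [c1 [H1 K1]] [c2 [H2 K2]]. exists (merge c1 c2). split.
  - unfold prod. apply in_flat_map. exists c1. split; auto. apply in_map; auto.
  - apply merge_cyl; auto.
Qed.
Open Scope Z_scope.

Fixpoint row (t : Z) (m : nat) : list site :=
  match m with O => [] | S m' => (Z.of_nat m', t) :: row t m' end.
Fixpoint win (s : Z) (K m : nat) : list site :=
  match K with O => [] | S K' => row s m ++ win (s + 1) K' m end.

Lemma In_row x t' t m : In (x, t') (row t m) <-> t' = t /\ 0 <= x < Z.of_nat m.
Proof.
  induction m; simpl. { split; [intros []|lia]. }
  rewrite IHm. split.
  - intros [H|H]; [inversion H; subst; lia | lia].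
  - intros [-> H]. destruct (Z.eq_dec x (Z.of_nat m)) as [->|Hx]; [left; auto| right; lia].
Qed.

Lemma NoDup_row t m : NoDup (row t m).
Proof.
  induction m; simpl; constructor; auto. rewrite In_row. lia.
Qed.

Lemma In_win x t s K m : In (x, t) (win s K m) <-> 0 <= x < Z.of_nat m /\ s <= t < s + Z.of_nat K.
Proof.
  revert s; induction K; intros s; simpl. { split; [intros []|lia]. }
  rewrite in_app_iff, In_row, IHK. split.
  - intros [H|H]; lia.
  - intros H. destruct (Z.eq_dec t s); [left|right]; lia.
Qed.

Lemma NoDup_win s K m : NoDup (win s K m).
Proof.
  revert s; induction K; intros s; simpl; [constructor|].
  apply NoDup_app; auto using NoDup_row.
  intros [x t] H1 H2. apply In_row in H1. apply In_win in H2. lia.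
Qed.

Lemma len_row t m : length (row t m) = m.
Proof. induction m; simpl; lia. Qed.

Lemma len_win s K m : length (win s K m) = (K * m)%nat.
Proof.
  revert s; induction K; intros s; simpl; auto. rewrite length_app, IHK.
  rewrite len_row. lia.
Qed.

Definition W (n s : Z) := win s (Z.to_nat (2*n)) (Z.to_nat (2*n)).

Definition block (n : Z) (w : Omega) (s : Z) : Prop :=
  forall st, In st (W n s) -> w st = beta st.

Fixpoint nbw (n a : Z) (M : nat) : list cylT :=
  match M with
  | O => [([], fun _ => true)]
  | S M' => prod (mism (W n a)) (nbw n (a + 2*n) M')
  end.

Lemma nbw_good n : 1 <= n -> forall M a c, In c (nbw n a M) ->
  NoDup (fst c) /\ forall st, In st (fst c) -> a <= snd st.
Proof.
  intros Hn M. induction M; intros a c Hc; cbn [nbw] in Hc.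
  - destruct Hc as [<-|[]]. simpl. split; [constructor| intros _ []].
  - apply prod_in in Hc. destruct Hc as [c1 [c2 [H1 [H2 ->]]]].
    destruct (mism_good _ (NoDup_win _ _ _) c1 H1) as [A1 B1].
    destruct (IHM _ c2 H2) as [A2 B2]. cbn [fst merge]. split.
    + apply NoDup_app; auto. intros [x t] Hx Hy.
      apply B1 in Hx. apply B2 in Hy. unfold W in Hx. apply In_win in Hx. cbn [snd] in Hy. lia.
    + intros [x t] Hst. apply in_app_or in Hst. destruct Hst as [Hst|Hst].
      * apply B1 in Hst. unfold W in Hst. apply In_win in Hst. cbn [snd]. lia.
      * apply B2 in Hst. cbn [snd] in *. lia.
Qed.

Lemma nbw_cover n w : forall M a, (forall k, (k < M)%nat -> ~ block n w (a + 2*n*Z.of_nat k)) ->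
  exists c, In c (nbw n a M) /\ cyl (fst c) (snd c) w.
Proof.
  induction M; intros a H; cbn [nbw].
  - exists ([], fun _ => true). split; [left; reflexivity|]. intros s [].
  - apply prod_cover.
    + apply mism_cover. specialize (H 0%nat ltac:(lia)). replace (a + 2*n*Z.of_nat 0) with a in H by lia.
      unfold block in H. apply not_all_ex_not in H. destruct H as [st H].
      exists st. apply imply_to_and in H. exact H.
    + apply IHM. intros k Hk. specialize (H (S k) ltac:(lia)).
      replace (a + 2 * n + 2 * n * Z.of_nat k) with (a + 2*n*Z.of_nat (S k)) by lia. exact H.
Qed.

Lemma nbw_mass n : forall M a, mass (nbw n a M) = ((1 - (/2) ^ (Z.to_nat (2*n) * Z.to_nat (2*n))) ^ M)%R.
Proof.
  induction M; intros a; cbn [nbw mass].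
  - unfold m1. simpl. lra.
  - rewrite mass_prod, mism_mass, IHM. unfold W. rewrite len_win. reflexivity.
Qed.

Lemma nbw_ne n : 1 <= n -> forall M a, nbw n a M <> [].
Proof.
  intros Hn M. induction M; intros a; cbn [nbw]; [congruence|].
  apply prod_ne; auto.
  intros H. apply (f_equal (@length _)) in H. rewrite mism_len in H. unfold W in H.
  rewrite len_win in H. cbn [length] in H. nia.
Qed.
Open Scope Z_scope.

Definition stepU n w t x := (x + xi n w x t) mod (2*n).
Definition stepD n w t y := (y - xi n w y t) mod (2*n).

Lemma mod_fix a N q r : 0 <= r < N -> a = N*q + r -> a mod N = r.
Proof. intros. symmetry. apply (Z.mod_unique a N q r); auto. Qed.

Lemma xi_block n w s x t : 1 <= n -> block n w s -> 0 <= x < 2*n -> s <= t < s + 2*n ->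
  xi n w x t = if x =? 0 then -1 else 1.
Proof.
  intros Hn Hb Hx Ht. unfold xi. rewrite Z.mod_small by lia.
  rewrite (Hb (x,t)). unfold beta; simpl. destruct (x =? 0); reflexivity.
  unfold W. apply In_win. lia.
Qed.

Lemma stepU_block n w s x t : 1 <= n -> block n w s -> 0 <= x < 2*n -> s <= t < s + 2*n ->
  stepU n w t x = if x =? 0 then 2*n-1 else if x =? 2*n-1 then 0 else x+1.
Proof.
  intros Hn Hb Hx Ht. unfold stepU. rewrite (xi_block n w s) by auto.
  destruct (Z.eqb_spec x 0).
  - apply mod_fix with (q := -1); lia.
  - destruct (Z.eqb_spec x (2*n-1)).
    + apply mod_fix with (q := 1); lia.
    + apply mod_fix with (q := 0); lia.
Qed.

Lemma stepD_block n w s y t : 1 <= n -> block n w s -> 0 <= y < 2*n -> s <= t < s + 2*n ->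
  stepD n w t y = if y =? 0 then 1 else y - 1.
Proof.
  intros Hn Hb Hx Ht. unfold stepD. rewrite (xi_block n w s) by auto.
  destruct (Z.eqb_spec y 0).
  - apply mod_fix with (q := 0); lia.
  - apply mod_fix with (q := 0); lia.
Qed.

Lemma mod2n_2 n a : (a mod (2*n)) mod 2 = a mod 2.
Proof. apply Z.mod_mod_divide. exists n; lia. Qed.

Lemma xi_pm n w x t : xi n w x t = 1 \/ xi n w x t = -1.
Proof. unfold xi; destruct (w _); auto. Qed.

Lemma parU n w t x d : (x - t) mod 2 = d -> (stepU n w t x - (t+1)) mod 2 = d.
Proof.
  intros H. unfold stepU. pose proof (mod2n_2 n (x + xi n w x t)) as Hm.
  pose proof (xi_pm n w x t) as He.
  set (m := (x + xi n w x t) mod (2*n)) in *. clearbody m.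
  set (e := xi n w x t) in *. clearbody e.
  Z.div_mod_to_equations. lia.
Qed.

Lemma parD n w t y d : (y - t) mod 2 = d -> (stepD n w (t-1) y - (t-1)) mod 2 = d.
Proof.
  intros H. unfold stepD. pose proof (mod2n_2 n (y - xi n w y (t-1))) as Hm.
  pose proof (xi_pm n w y (t-1)) as He.
  set (m := (y - xi n w y (t-1)) mod (2*n)) in *. clearbody m.
  set (e := xi n w y (t-1)) in *. clearbody e.
  Z.div_mod_to_equations. lia.
Qed.

Lemma range_mod n a : 1 <= n -> 0 <= a mod (2*n) < 2*n.
Proof. intros. apply Z.mod_pos_bound. lia. Qed.

Definition FP n w a g := (forall j, a < j -> g j = stepU n w (j-1) (g (j-1))) /\
  (forall j, a <= j -> 0 <= g j < 2*n /\ (g j - j) mod 2 = 0).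
Definition BP n w a g := (forall j, j <= a -> g (j-1) = stepD n w (j-1) (g j)) /\
  (forall j, j <= a -> 0 <= g j < 2*n /\ (g j - j) mod 2 = 1).

Lemma up_inv n w s a g : 1 <= n -> block n w s -> a <= s -> FP n w a g ->
  forall k : nat, Z.of_nat k <= 2*n-2 ->
  g (s + Z.of_nat k) = 0 \/ g (s + Z.of_nat k) = 2*n-1 \/ Z.of_nat k + 1 <= g (s + Z.of_nat k).
Proof.
  intros Hn Hb Ha [HS HR]. induction k; intros Hk.
  - replace (s + Z.of_nat 0) with s by lia. pose proof (HR s ltac:(lia)). lia.
  - assert (E : g (s + Z.of_nat (S k)) = stepU n w (s + Z.of_nat k) (g (s + Z.of_nat k))).
    { rewrite (HS (s + Z.of_nat (S k))) by lia.
      replace (s + Z.of_nat (S k) - 1) with (s + Z.of_nat k) by lia. reflexivity. }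
    rewrite E. pose proof (HR (s + Z.of_nat k) ltac:(lia)) as [Hr _].
    rewrite (stepU_block n w s) by (auto; lia).
    specialize (IHk ltac:(lia)).
    destruct (Z.eqb_spec (g (s + Z.of_nat k)) 0); [lia|].
    destruct (Z.eqb_spec (g (s + Z.of_nat k)) (2*n-1)); lia.
Qed.

Lemma up_trap n w s a g : 1 <= n -> block n w s -> a <= s -> FP n w a g ->
  g (s + 2*n - 2) = 0 \/ g (s + 2*n - 2) = 2*n - 1.
Proof.
  intros Hn Hb Ha HF. pose proof (up_inv n w s a g Hn Hb Ha HF (Z.to_nat (2*n-2)) ltac:(lia)) as H.
  rewrite Z2Nat.id in H by lia. replace (s + (2*n-2)) with (s + 2*n - 2) in H by lia.
  pose proof (proj2 HF (s + 2*n - 2) ltac:(lia)). lia.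
Qed.

Lemma up_collapse n w s a1 a2 g1 g2 : 1 <= n -> block n w s -> a1 <= s -> a2 <= s ->
  FP n w a1 g1 -> FP n w a2 g2 -> forall j, s + 2*n - 2 <= j -> g1 j = g2 j.
Proof.
  intros Hn Hb H1 H2 F1 F2.
  assert (E0 : g1 (s + 2*n - 2) = g2 (s + 2*n - 2)).
  { pose proof (up_trap n w s a1 g1 Hn Hb H1 F1).
    pose proof (up_trap n w s a2 g2 Hn Hb H2 F2).
    pose proof (proj2 (proj2 F1 (s + 2*n - 2) ltac:(lia))) as P1.
    pose proof (proj2 (proj2 F2 (s + 2*n - 2) ltac:(lia))) as P2.
    set (t := s + 2*n - 2) in *. clearbody t.
    Z.div_mod_to_equations; lia. }
  assert (Hk : forall k : nat, g1 (s + 2*n - 2 + Z.of_nat k) = g2 (s + 2*n - 2 + Z.of_nat k)).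
  { induction k.
    - replace (s + 2*n - 2 + Z.of_nat 0) with (s + 2*n - 2) by lia. exact E0.
    - rewrite (proj1 F1 _) by lia. rewrite (proj1 F2 _) by lia.
      replace (s + 2 * n - 2 + Z.of_nat (S k) - 1) with (s + 2*n - 2 + Z.of_nat k) by lia.
      rewrite IHk. reflexivity. }
  intros j Hj. specialize (Hk (Z.to_nat (j - (s + 2*n - 2)))).
  rewrite Z2Nat.id in Hk by lia. replace (s + 2 * n - 2 + (j - (s + 2 * n - 2))) with j in Hk by lia.
  exact Hk.
Qed.

Lemma down_inv n w s a g : 1 <= n -> block n w s -> s + 2*n <= a -> BP n w a g ->
  forall k : nat, Z.of_nat k <= 2*n-2 ->
  g (s + 2*n - Z.of_nat k) = 0 \/ g (s + 2*n - Z.of_nat k) = 1 \/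
  g (s + 2*n - Z.of_nat k) <= 2*n - 1 - Z.of_nat k.
Proof.
  intros Hn Hb Ha [HS HR]. induction k; intros Hk.
  - pose proof (HR (s + 2*n - Z.of_nat 0) ltac:(lia)). lia.
  - assert (E : g (s + 2*n - Z.of_nat (S k)) = stepD n w (s + 2*n - Z.of_nat k - 1) (g (s + 2*n - Z.of_nat k))).
    { rewrite <- (HS (s + 2*n - Z.of_nat k)) by lia. f_equal. lia. }
    rewrite E. pose proof (HR (s + 2*n - Z.of_nat k) ltac:(lia)) as [Hr _].
    rewrite (stepD_block n w s) by (auto; lia).
    specialize (IHk ltac:(lia)).
    destruct (Z.eqb_spec (g (s + 2*n - Z.of_nat k)) 0); lia.
Qed.

Lemma down_collapse n w s a1 a2 g1 g2 : 1 <= n -> block n w s -> s + 2*n <= a1 -> s + 2*n <= a2 ->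
  BP n w a1 g1 -> BP n w a2 g2 -> forall j, j <= s + 2 -> g1 j = g2 j.
Proof.
  intros Hn Hb H1 H2 F1 F2.
  assert (T : forall a g, s + 2*n <= a -> BP n w a g -> g (s + 2) = 0 \/ g (s + 2) = 1).
  { intros a g Ha HB. pose proof (down_inv n w s a g Hn Hb Ha HB (Z.to_nat (2*n-2)) ltac:(lia)) as H.
    rewrite Z2Nat.id in H by lia. replace (s + 2*n - (2*n-2)) with (s + 2) in H by lia.
    pose proof (proj2 HB (s + 2) ltac:(lia)). lia. }
  assert (E0 : g1 (s + 2) = g2 (s + 2)).
  { pose proof (T a1 g1 H1 F1). pose proof (T a2 g2 H2 F2).
    pose proof (proj2 (proj2 F1 (s + 2) ltac:(lia))) as P1.
    pose proof (proj2 (proj2 F2 (s + 2) ltac:(lia))) as P2.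
    set (t := s + 2) in *. clearbody t.
    Z.div_mod_to_equations; lia. }
  assert (Hk : forall k : nat, g1 (s + 2 - Z.of_nat k) = g2 (s + 2 - Z.of_nat k)).
  { induction k.
    - replace (s + 2 - Z.of_nat 0) with (s + 2) by lia. exact E0.
    - replace (s + 2 - Z.of_nat (S k)) with (s + 2 - Z.of_nat k - 1) by lia.
      rewrite (proj1 F1 _) by lia. rewrite (proj1 F2 _) by lia.
      rewrite IHk. reflexivity. }
  intros j Hj. specialize (Hk (Z.to_nat (s + 2 - j))).
  rewrite Z2Nat.id in Hk by lia. replace (s + 2 - (s + 2 - j)) with j in Hk by lia.
  exact Hk.
Qed.
Open Scope Z_scope.

Fixpoint F n w s x (k : nat) : Z :=
  match k with O => x | S k' => stepU n w (s + Z.of_nat k') (F n w s x k') end.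
Definition Fw n w s x j := F n w s x (Z.to_nat (j - s)).

Lemma Fw_FP n w s x : 1 <= n -> 0 <= x < 2*n -> (x - s) mod 2 = 0 -> FP n w s (Fw n w s x).
Proof.
  intros Hn Hx Hp. split.
  - intros j Hj. unfold Fw. replace (Z.to_nat (j - s)) with (S (Z.to_nat (j - 1 - s))) by lia.
    simpl. replace (s + Z.of_nat (Z.to_nat (j - 1 - s))) with (j - 1) by lia. reflexivity.
  - assert (H : forall k : nat, 0 <= F n w s x k < 2*n /\ (F n w s x k - (s + Z.of_nat k)) mod 2 = 0).
    { induction k; simpl.
      - replace (s + 0) with s by lia. auto.
      - split. apply range_mod; auto.
        replace (s + Z.pos (Pos.of_succ_nat k)) with (s + Z.of_nat k + 1) by lia.
        apply parU. apply IHk. }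
    intros j Hj. unfold Fw. specialize (H (Z.to_nat (j - s))).
    replace (s + Z.of_nat (Z.to_nat (j - s))) with j in H by lia. exact H.
Qed.

Fixpoint B n w s y (k : nat) : Z :=
  match k with O => y | S k' => stepD n w (s - Z.of_nat k' - 1) (B n w s y k') end.
Definition Bw n w s y j := B n w s y (Z.to_nat (s - j)).

Lemma Bw_BP n w s y : 1 <= n -> 0 <= y < 2*n -> (y - s) mod 2 = 1 -> BP n w s (Bw n w s y).
Proof.
  intros Hn Hx Hp. split.
  - intros j Hj. unfold Bw. replace (Z.to_nat (s - (j - 1))) with (S (Z.to_nat (s - j))) by lia.
    simpl. replace (s - Z.of_nat (Z.to_nat (s - j)) - 1) with (j - 1) by lia. reflexivity.
  - assert (H : forall k : nat, 0 <= B n w s y k < 2*n /\ (B n w s y k - (s - Z.of_nat k)) mod 2 = 1).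
    { induction k; simpl.
      - replace (s - 0) with s by lia. auto.
      - split. apply range_mod; auto.
        replace (s - Z.pos (Pos.of_succ_nat k)) with (s - Z.of_nat k - 1) by lia.
        apply parD. apply IHk. }
    intros j Hj. unfold Bw. specialize (H (Z.to_nat (s - j))).
    replace (s - Z.of_nat (Z.to_nat (s - j))) with j in H by lia. exact H.
Qed.

Lemma diffU n a e : 1 <= n -> (e = 1 \/ e = -1) ->
  ((a + e) mod (2*n) - a) mod (2*n) = 1 \/ ((a + e) mod (2*n) - a) mod (2*n) = 2*n - 1.
Proof.
  intros Hn He. pose proof (Z_div_mod_eq_full (a + e) (2*n)) as E.
  set (q := (a + e) / (2*n)) in *. clearbody q.
  replace ((a + e) mod (2*n) - a) with (e + (-q) * (2*n)) by lia.
  rewrite Z_mod_plus_full.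
  destruct He as [-> | ->]; [left; apply mod_fix with (q:=0) | right; apply mod_fix with (q:=-1)]; lia.
Qed.

Lemma diffD n a e : 1 <= n -> (e = 1 \/ e = -1) ->
  (a - (a - e) mod (2*n)) mod (2*n) = 1 \/ (a - (a - e) mod (2*n)) mod (2*n) = 2*n - 1.
Proof.
  intros Hn He. pose proof (Z_div_mod_eq_full (a - e) (2*n)) as E.
  set (q := (a - e) / (2*n)) in *. clearbody q.
  replace (a - (a - e) mod (2*n)) with (e + q * (2*n)) by lia.
  rewrite Z_mod_plus_full.
  destruct He as [-> | ->]; [left; apply mod_fix with (q:=0) | right; apply mod_fix with (q:=-1)]; lia.
Qed.

Definition Egood n w := forall T, (exists s, s + 2*n <= T /\ block n w s) /\ (exists s, T <= s /\ block n w s).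

Lemma full_FP n w p a : path_up n p -> in_web_up n w p -> FP n w a p.
Proof.
  intros Hp Hw. split.
  - intros j _. apply Hw.
  - intros j _. destruct (Hp j) as [A [B _]]. auto.
Qed.

Lemma full_BP n w p a : path_down n p -> in_web_down n w p -> BP n w a p.
Proof.
  intros Hp Hw. split.
  - intros j _. apply Hw.
  - intros j _. destruct (Hp j) as [A [B _]]. auto.
Qed.

Lemma det n w : 1 <= n -> Egood n w -> unique_path_up n w /\ unique_path_down n w.
Proof.
  intros Hn E. split; split.
  -
    set (sel := fun T => proj1_sig (constructive_indefinite_description _ (proj1 (E T)))).
    assert (Hsel : forall T, sel T + 2*n <= T /\ block n w (sel T)).
    { intros T. unfold sel. destruct (constructive_indefinite_description _ _) as [s Hs]. exact Hs. }
    set (g := fun T => Fw n w (sel T) (sel T mod 2)).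
    assert (HF : forall T, FP n w (sel T) (g T)).
    { intros T. apply Fw_FP; auto. pose proof (Z.mod_pos_bound (sel T) 2). lia.
      Z.div_mod_to_equations. lia. }
    set (p := fun i => g i i).
    assert (Hstep : forall i, p i = stepU n w (i-1) (p (i-1))).
    { intros i. unfold p.
      destruct (Hsel i) as [A1 B1]. destruct (Hsel (i-1)) as [A2 B2].
      rewrite (proj1 (HF i) i) by lia. f_equal.
      destruct (Z.le_ge_cases (sel i) (sel (i-1))).
      + apply (up_collapse n w (sel (i-1)) (sel i) (sel (i-1))); auto; lia.
      + apply (up_collapse n w (sel i) (sel i) (sel (i-1))); auto; lia. }
    exists p. split.
    + intros i. destruct (proj2 (HF i) i ltac:(pose proof (Hsel i); lia)) as [R P].
      split; [exact R|]. split; [exact P|]. rewrite Hstep. unfold stepU.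
      apply diffU; auto. apply xi_pm.
    + intros i. apply Hstep.
  -
    intros p q Pp Wp Pq Wq i. destruct (proj1 (E i)) as [s [Hs Hb]].
    apply (up_collapse n w s s s p q); auto; try lia; apply full_FP; auto.
  -
    set (sel := fun T => proj1_sig (constructive_indefinite_description _ (proj2 (E T)))).
    assert (Hsel : forall T, T <= sel T /\ block n w (sel T)).
    { intros T. unfold sel. destruct (constructive_indefinite_description _ _) as [s Hs]. exact Hs. }
    set (g := fun T => Bw n w (sel T + 2*n) ((sel T + 2*n + 1) mod 2)).
    assert (HB : forall T, BP n w (sel T + 2*n) (g T)).
    { intros T. apply Bw_BP; auto. pose proof (Z.mod_pos_bound (sel T + 2*n + 1) 2). lia.
      Z.div_mod_to_equations. lia. }
    set (p := fun i => g i i).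
    assert (Hstep : forall i, p (i-1) = stepD n w (i-1) (p i)).
    { intros i. unfold p.
      destruct (Hsel i) as [A1 B1]. destruct (Hsel (i-1)) as [A2 B2].
      rewrite <- (proj1 (HB i) i) by lia.
      destruct (Z.le_ge_cases (sel i) (sel (i-1))).
      + apply (down_collapse n w (sel i) (sel (i-1) + 2*n) (sel i + 2*n)); auto; lia.
      + apply (down_collapse n w (sel (i-1)) (sel (i-1) + 2*n) (sel i + 2*n)); auto; lia. }
    exists p. split.
    + intros i. destruct (proj2 (HB i) i ltac:(pose proof (Hsel i); lia)) as [R P].
      split; [exact R|]. split; [exact P|]. rewrite Hstep. unfold stepD.
      apply diffD; auto. apply xi_pm.
    + intros i. apply Hstep.
  - intros p q Pp Wp Pq Wq i. destruct (proj2 (E i)) as [s [Hs Hb]].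
    apply (down_collapse n w s (s + 2*n) (s + 2*n) p q); auto; try lia; apply full_BP; auto.
Qed.
Open Scope R_scope.

Lemma half_pow m : 0 < (/2) ^ m <= 1.
Proof. induction m; simpl; lra. Qed.

Lemma geo K : sum_f_R0 (fun J => (/2) ^ J) K = 2 - 2 * (/2) ^ (S K).
Proof. induction K; simpl in *; [lra|]. rewrite IHK. simpl. lra. Qed.

Theorem proposition3p2 : forall n : Z, (1 <= n)%Z ->
  almost_surely (fun w => unique_path_up n w /\ unique_path_down n w).
Proof.
  intros n Hn eps Heps.
  set (m := (Z.to_nat (2*n) * Z.to_nat (2*n))%nat).
  assert (Hm : (1 <= m)%nat) by (unfold m; nia).
  set (q := (/2) ^ m).
  assert (Hq : 0 < q <= /2).
  { unfold q. destruct m as [|m']; [lia|]. simpl. pose proof (half_pow m'). nra. }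
  assert (Hr : Rabs (1 - q) < 1) by (rewrite Rabs_pos_eq; lra).
  set (y := Rmin (eps/4) (/2)).
  assert (Hy : 0 < y) by (unfold y; apply Rmin_pos; lra).
  destruct (pow_lt_1_zero _ Hr y Hy) as [M0 HM0].
  specialize (HM0 M0 (le_n _)). rewrite Rabs_pos_eq in HM0 by (apply pow_le; lra).
  set (rho := (1 - q) ^ M0) in *.
  assert (Hrho : 0 <= rho <= eps/4 /\ rho <= /2).
  { split; [split|]. apply pow_le; lra.
    pose proof (Rmin_l (eps/4) (/2)); unfold y in HM0; lra.
    pose proof (Rmin_r (eps/4) (/2)); unfold y in HM0; lra. }
  set (MJ := fun J : nat => (M0 * S J)%nat).
  set (C := fun J : nat => nbw n (2*n*Z.of_nat J)%Z (MJ J) ++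
                            nbw n (-(2*n)*(Z.of_nat J + Z.of_nat (MJ J)))%Z (MJ J)).
  apply (union_null _ C).
  - intros J. unfold C. pose proof (nbw_ne n Hn (MJ J) (2*n*Z.of_nat J)%Z).
    destruct (nbw n _ (MJ J)); simpl; congruence.
  - intros J c Hc. unfold C in Hc. apply in_app_or in Hc.
    destruct Hc as [Hc|Hc]; eapply nbw_good in Hc; eauto; apply Hc.
  - intros w Hw.
    assert (HE : ~ Egood n w) by (intros HE; apply Hw, det; auto).
    unfold Egood in HE. apply not_all_ex_not in HE. destruct HE as [T HT].
    exists (Z.to_nat (Z.abs T)).
    apply not_and_or in HT. destruct HT as [HT|HT].
    + destruct (nbw_cover n w (MJ (Z.to_nat (Z.abs T)))
                 (-(2*n)*(Z.of_nat (Z.to_nat (Z.abs T)) + Z.of_nat (MJ (Z.to_nat (Z.abs T)))))%Z)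
        as [c [Hc Hcy]].
      { intros k Hk Hb. apply HT. eexists; split; [|exact Hb]. nia. }
      exists c. split; auto. unfold C. apply in_or_app. right. exact Hc.
    + destruct (nbw_cover n w (MJ (Z.to_nat (Z.abs T))) (2*n*Z.of_nat (Z.to_nat (Z.abs T)))%Z)
        as [c [Hc Hcy]].
      { intros k Hk Hb. apply HT. eexists; split; [|exact Hb]. nia. }
      exists c. split; auto. unfold C. apply in_or_app. left. exact Hc.
  - intros K. eapply Rle_trans with (sum_f_R0 (fun J => eps/2 * (/2) ^ J) K).
    + apply sum_Rle. intros J _. unfold C. rewrite mass_app, !nbw_mass.
      fold m. fold q. unfold MJ. rewrite pow_mult. fold rho. change (rho ^ S J) with (rho * rho ^ J).
      assert (rho ^ J <= (/2) ^ J) by (apply pow_incr; lra).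
      assert (0 <= rho ^ J) by (apply pow_le; lra).
      nra.
    + rewrite (sum_eq _ (fun J => (/2) ^ J * (eps/2))) by (intros; ring). rewrite <- scal_sum. rewrite geo. pose proof (half_pow (S K)). nra.
Qed.
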